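(* Let $C$ be a $k$-context of the call-by-value $\lambda$-calculus and let $c_1,c_2\in\mathcal{T}(C)$ (so $c_1,c_2$ are resource $k$-contexts). Let $\tilde c_1$ be a rigid of $c_1$ and $\tilde c_2$ a rigid of $c_2$. For $i=1,\dots,k$ let $\vec v^{\,i}=\langle v^i_1,\dots,v^i_{\deg_{\Box_i}(c_1)}\rangle$ and $\vec u^{\,i}=\langle u^i_1,\dots,u^i_{\deg_{\Box_i}(c_2)}\rangle$ be lists of resource values. If $\tilde c_1[\vec v^{\,1},\dots,\vec v^{\,k}]=\tilde c_2[\vec u^{\,1},\dots,\vec u^{\,k}]$, then $c_1=c_2$ and $[\vec v^{\,i}]=[\vec u^{\,i}]$ for every $i=1,\dots,k$, where $[\vec w]$ denotes the finite multiset of the elements of the list $\vec w$.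
   Context: CbV $\lambda$-terms are ordinary $\lambda$-terms $M::=x\mid \lambda x.M\mid MM$; values are variables and abstractions. A $k$-context $C$ is a $\lambda$-term possibly containing holes $\Box_1,\dots,\Box_k$ (each any number of times); $C[M_1,\dots,M_k]$ denotes filling $\Box_i$ with $M_i$ (variable capture allowed). Resource CbV terms: resource values $v::=x\mid \lambda x.s$ and resource simple terms $s::= s_1s_2\mid [v_1,\dots,v_n]$ ($n\ge 0$, brackets denote finite multisets, ''bags''), taken up to $\alpha$-equivalence. Resource $k$-contexts are defined the same way but additionally allowing $\Box_1,\dots,\Box_k$ as value-contexts: $c^v::=\Box_1\mid\dots\mid\Box_k\mid x\mid \lambda x.c^s$, $c^s::=c^s_1c^s_2\mid[c^v_1,\dots,c^v_n]$. $\deg_{\Box_i}(c)$ is the number of occurrences of $\Box_i$ in $c$. Taylor expansion $\mathcal{T}$ (sets of resource simple terms/contexts): $\mathcal{T}(x)=\{[x,\dots,x]\ (n \text{ copies})\mid n\in\mathbb N\}$, $\mathcal{T}(\Box_i)=\{[\Box_i,\dots,\Box_i]\ (n\text{ copies})\mid n\in\mathbb N\}$, $\mathcal{T}(\lambda x.M)=\{[\lambda x.s_1,\dots,\lambda x.s_n]\mid n\in\mathbb N,\ s_j\in\mathcal{T}(M)\}$, $\mathcal{T}(M_1M_2)=\{s_1s_2\mid s_j\in\mathcal{T}(M_j)\}$. Rigid contexts are built like resource contexts but with ordered lists $\langle\cdot,\dots,\cdot\rangle$ in place of bags. The rigids of a resource context $c$: $\mathrm{Rigid}(\Box_i)=\{\Box_i\}$,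 $\mathrm{Rigid}(x)=\{x\}$, $\mathrm{Rigid}(\lambda x.c_0)=\{\lambda x.\tilde c_0\mid\tilde c_0\in\mathrm{Rigid}(c_0)\}$, $\mathrm{Rigid}(c_0c_1)=\{\tilde c_0\tilde c_1\mid \tilde c_j\in\mathrm{Rigid}(c_j)\}$, $\mathrm{Rigid}([c_1,\dots,c_n])=\{\langle\tilde c_{\sigma(1)},\dots,\tilde c_{\sigma(n)}\rangle\mid\sigma\text{ a permutation},\ \tilde c_j\in\mathrm{Rigid}(c_j)\}$. Filling a rigid $\tilde c$ of $c$ with lists $\vec v^{\,i}$ of resource values of length $\deg_{\Box_i}(c)$, producing a resource term $\tilde c[\vec v^{\,1},\dots,\vec v^{\,k}]$: for $\tilde c=\Box_i$, the result is the unique value in $\vec v^{\,i}$ (others lists empty); for $x$ it is $x$; $(\lambda x.\tilde c_0)[\vec v^{\,1},\dots,\vec v^{\,k}]=\lambda x.\tilde c_0[\vec v^{\,1},\dots,\vec v^{\,k}]$; for $\tilde c_1\tilde c_2$, split each $\vec v^{\,i}=\vec w^{\,i1}\vec w^{\,i2}$ (concatenation) with $\vec w^{\,ij}$ of length $\deg_{\Box_i}(c_j)$, and the result is $\tilde c_1[\vec w^{\,11},\dots,\vec w^{\,k1}]\,\tilde c_2[\vec w^{\,12},\dots,\vec w^{\,k2}]$; for $\langle\tilde c_{\sigma(1)},\dots,\tilde c_{\sigma(n)}\rangle$, split each $\vec v^{\,i}=\vec w^{\,i1}\cdots\vec w^{\,in}$ with $\vec w^{\,ij}$ of length $\deg_{\Box_i}(c_{\sigma(j)})$,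 and the result is the bag $[\tilde c_{\sigma(1)}[\vec w^{\,11},\dots,\vec w^{\,k1}],\dots,\tilde c_{\sigma(n)}[\vec w^{\,1n},\dots,\vec w^{\,kn}]]$. *)

(* Defs.v *)
From Stdlib Require Import List Arith Permutation.
Import ListNotations.

(* lambda k-contexts: de Bruijn variables, holes Box_i with index i : nat
   (the paper's Box_1..Box_k are our Box_0..Box_(k-1)). *)
Inductive lterm : Type :=
| LVar (x : nat)
| LHole (i : nat)
| LLam (M : lterm)
| LApp (M N : lterm).

Fixpoint holes_below (k : nat) (C : lterm) : Prop :=
  match C with
  | LVar _ => True
  | LHole i => i < k
  | LLam M => holes_below k M
  | LApp M N => holes_below k M /\ holes_below k N
  end.

(* resource syntax parameterised by a type A of hole labels:
   A = nat gives resource contexts (and rigid contexts, reading lists as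
   ordered), A = Empty_set gives resource terms (no holes). *)
Inductive rv (A : Type) : Type :=
| RVar (x : nat)
| RHole (a : A)
| RLam (s : rs A)
with rs (A : Type) : Type :=
| RApp (s1 s2 : rs A)
| RBag (l : list (rv A)).

Arguments RVar {A} x.
Arguments RHole {A} a.
Arguments RLam {A} s.
Arguments RApp {A} s1 s2.
Arguments RBag {A} l.

(* Equality of resource terms/contexts: bags are finite multisets
   (alpha-equivalence is syntactic identity in de Bruijn syntax). *)
Inductive req_v {A : Type} : rv A -> rv A -> Prop :=
| req_var x : req_v (RVar x) (RVar x)
| req_hole a : req_v (RHole a) (RHole a)
| req_lam s t : req_s s t -> req_v (RLam s) (RLam t)
with req_s {A : Type} : rs A -> rs A -> Prop :=
| req_app s1 s2 t1 t2 : req_s s1 t1 -> req_s s2 t2 -> req_s (RApp s1 s2) (RApp t1 t2)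
| req_bag l1 l2 l2' : Permutation l2 l2' -> Forall2 req_v l1 l2' ->
    req_s (RBag l1) (RBag l2).

(* Rigid(c): rigid contexts are the same syntax with lists read as ordered;
   rc is a rigid of c iff rc is obtained from c by choosing an ordering of
   each bag, recursively, i.e. exactly the clauses of req_s. *)
Definition rigid_of (rc c : rs nat) : Prop := req_s rc c.

Fixpoint inT (M : lterm) (c : rs nat) : Prop :=
  match M with
  | LVar x => exists n, c = RBag (repeat (RVar x) n)
  | LHole i => exists n, c = RBag (repeat (RHole i) n)
  | LLam M0 => exists l : list (rs nat),
      c = RBag (map RLam l) /\ (forall s, In s l -> inT M0 s)
  | LApp M1 M2 => exists s1 s2, c = RApp s1 s2 /\ inT M1 s1 /\ inT M2 s2
  end.

Fixpoint deg_v (v : rv nat) (i : nat) : nat :=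
  match v with
  | RVar _ => 0
  | RHole j => if Nat.eqb i j then 1 else 0
  | RLam s => deg_s s i
  end
with deg_s (s : rs nat) (i : nat) : nat :=
  match s with
  | RApp s1 s2 => deg_s s1 i + deg_s s2 i
  | RBag l => (fix go (l : list (rv nat)) : nat :=
                 match l with
                 | [] => 0
                 | v :: l' => deg_v v i + go l'
                 end) l
  end.

Definition rterm_v := rv Empty_set.
Definition rterm_s := rs Empty_set.

(* Filling a rigid with lists f i of resource values (f i for Box_i);
   lists are consumed left to right, split according to the degrees of
   the sub-rigids.  For a hole the (unique, when lengths match) head of the
   list is used; the default RVar 0 is never reached when
   length (f i) = deg_{Box_i}. *)
Fixpoint fill_v (v : rv nat) (f : nat -> list rterm_v) : rterm_v :=
  match v with
  | RVar x => RVar x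
  | RHole j => hd (RVar 0) (f j)
  | RLam s => RLam (fill_s s f)
  end
with fill_s (s : rs nat) (f : nat -> list rterm_v) : rterm_s :=
  match s with
  | RApp s1 s2 =>
      RApp (fill_s s1 (fun i => firstn (deg_s s1 i) (f i)))
           (fill_s s2 (fun i => skipn (deg_s s1 i) (f i)))
  | RBag l => RBag ((fix go (l : list (rv nat)) (f : nat -> list rterm_v)
                        : list rterm_v :=
                       match l with
                       | [] => []
                       | v :: l' =>
                           fill_v v (fun i => firstn (deg_v v i) (f i))
                             :: go l' (fun i => skipn (deg_v v i) (f i))
                       end) l f)
  end.

(* Main.v *)
Require Import Defs.
From Stdlib Require Import List Arith Permutation Lia FunctionalExtensionality.
Import ListNotations.

Fixpoint degL (l : list (rv nat)) (i : nat) : nat :=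
  match l with [] => 0 | v :: l' => deg_v v i + degL l' i end.

Fixpoint goL (l : list (rv nat)) (f : nat -> list rterm_v) : list rterm_v :=
  match l with
  | [] => []
  | v :: l' => fill_v v (fun i => firstn (deg_v v i) (f i))
               :: goL l' (fun i => skipn (deg_v v i) (f i))
  end.

Lemma deg_bag l i : deg_s (RBag l) i = degL l i.
Proof. induction l; simpl; auto. Qed.

Lemma fill_bag l f : fill_s (RBag l) f = RBag (goL l f).
Proof. revert f; induction l; intros f; simpl; auto.
Qed.

Fixpoint rv_sym {A} (v w : rv A) (H : req_v v w) {struct H} : req_v w v
with rs_sym {A} (s t : rs A) (H : req_s s t) {struct H} : req_s t s.
Proof.
- destruct H. constructor. constructor. constructor; apply rs_sym; assumption.
- destruct H. constructor; apply rs_sym; assumption.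
  assert (F' : Forall2 req_v l2' l1).
  { clear - H0 rv_sym. revert l1 l2' H0. fix go 3. intros l1 l2' F.
    destruct F; constructor. apply rv_sym; assumption. apply go; assumption. }
  destruct (Permutation_Forall2 (Permutation_sym H) F') as [l1'' [P1 F1]].
  econstructor; eauto.
Qed.

Fixpoint rv_trans {A} (u v w : rv A) (H : req_v u v) {struct H} : req_v v w -> req_v u w
with rs_trans {A} (s t r : rs A) (H : req_s s t) {struct H} : req_s t r -> req_s s r.
Proof.
- destruct H; intros H2; inversion H2; subst; constructor. eapply rs_trans; eauto.
- destruct H; intros H2; inversion H2; subst.
  + constructor; eapply rs_trans; eauto.
  + match goal with HH : Forall2 req_v l2 _ |- _ => rename HH into H5 end.
    destruct (Permutation_Forall2 H H5) as [l3'' [P1 F1]].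
    assert (F' : Forall2 req_v l1 l3'').
    { clear - H0 F1 rv_trans. revert l1 l2' l3'' H0 F1. fix go 4. intros l1 l2' l3'' F G.
      destruct F; inversion G; subst; constructor. eapply rv_trans; eauto. eapply go; eauto. }
    econstructor; [eapply perm_trans; eauto | exact F'].
Qed.

Lemma degL_perm l m i : Permutation l m -> degL l i = degL m i.
Proof. induction 1; simpl; lia. Qed.

Fixpoint rv_deg (v w : rv nat) (H : req_v v w) {struct H} : forall i, deg_v v i = deg_v w i
with rs_deg (s t : rs nat) (H : req_s s t) {struct H} : forall i, deg_s s i = deg_s t i.
Proof.
- destruct H; intros i; simpl; auto.
- destruct H; intros i.
  + simpl. rewrite (rs_deg _ _ H), (rs_deg _ _ H0). reflexivity.
  + rewrite !deg_bag. rewrite (degL_perm _ _ i H).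
    clear H. revert l1 l2' H0. fix go 3. intros l1 l2' F.
    destruct F; simpl; [reflexivity|]. rewrite (rv_deg _ _ H); rewrite (go _ _ F); reflexivity.
Qed.

Lemma Forall2_back {A} (R : rv A -> rv A -> Prop) (Q Q' : rv A -> Prop) l m :
  Forall2 R l m -> (forall b, In b m -> Q b) -> (forall a b, R a b -> Q b -> Q' a) ->
  forall a, In a l -> Q' a.
Proof. induction 1; simpl; intros HQ HR a Ha; [contradiction|].
  destruct Ha; subst; eauto. Qed.

Lemma all_repeat {A} (a : A) l : (forall y, In y l -> y = a) -> l = repeat a (length l).
Proof. induction l; simpl; intros H; auto. rewrite (H a0), <- IHl; auto. Qed.

Lemma all_lam (P : rs nat -> Prop) l :
  (forall a, In a l -> exists s, a = RLam s /\ P s) ->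
  exists l', l = map RLam l' /\ forall s, In s l' -> P s.
Proof. induction l; simpl; intros H. exists []; simpl; intuition.
  destruct (H a) as [s [-> Ps]]; auto. destruct IHl as [l' [-> Hl']]; auto.
  exists (s :: l'); simpl; split; auto. intros s0 [<-|]; auto. Qed.

Lemma inT_req M : forall c r, inT M c -> req_s r c -> inT M r.
Proof.
  induction M; simpl; intros c r Hc Hr.
  - destruct Hc as [n ->]. inversion Hr; subst. exists (length l1). f_equal. apply all_repeat.
    intros y Hy. apply (Forall2_back req_v (fun b => b = RVar x) (fun a => a = RVar x) l1 l2' H2); auto.
    intros b0 Hb. apply (repeat_spec n). eapply Permutation_in; [apply Permutation_sym|]; eauto.
    intros a0 b0 Hab ->. inversion Hab; auto.
  - destruct Hc as [n ->]. inversion Hr; subst. exists (length l1). f_equal. apply all_repeat.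
    intros y Hy. apply (Forall2_back req_v (fun b => b = RHole i) (fun a => a = RHole i) l1 l2' H2); auto.
    intros b0 Hb. apply (repeat_spec n). eapply Permutation_in; [apply Permutation_sym|]; eauto.
    intros a0 b0 Hab ->. inversion Hab; auto.
  - destruct Hc as [l [-> Hl]]. inversion Hr; subst. destruct (all_lam (inT M) l1) as [l' [-> Hl']]; [|eauto].
    apply (Forall2_back req_v (fun b => exists s, b = RLam s /\ inT M s) (fun a => exists s, a = RLam s /\ inT M s) l1 l2' H2).
    intros b Hb. apply (Permutation_in _ (Permutation_sym H0)) in Hb.
    apply in_map_iff in Hb. destruct Hb as [s [<- Hs]]. eauto.
    intros a b Hab [s [-> Hs]]. inversion Hab; subst. eauto.
  - destruct Hc as [s1 [s2 [-> [H1 H2]]]]. inversion Hr; subst. eauto 7.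
Qed.

Lemma bag_cons_inv {A} (a : rv A) l m : req_s (RBag (a :: l)) (RBag m) ->
  exists m1 b m2, m = m1 ++ b :: m2 /\ req_v a b /\ req_s (RBag l) (RBag (m1 ++ m2)).
Proof. intros H. inversion H; subst. match goal with HH : Forall2 req_v (a :: l) _ |- _ => inversion HH; subst end.
  assert (In y m) by (eapply Permutation_in; [apply Permutation_sym; eauto | left; auto]).
  destruct (in_split _ _ H0) as [m1 [m2 ->]]. exists m1, y, m2. repeat split; auto.
  econstructor; [|eauto]. apply Permutation_sym. apply (Permutation_cons_app_inv m1 m2 (a:=y)).
  apply Permutation_sym; auto. Qed.

Lemma bag_cons {A} (a b : rv A) l m1 m2 : req_v a b -> req_s (RBag l) (RBag (m1 ++ m2)) ->
  req_s (RBag (a :: l)) (RBag (m1 ++ b :: m2)).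
Proof. intros H1 H2. inversion H2; subst. econstructor; [|constructor; eauto].
  apply Permutation_sym. eapply perm_trans. apply perm_skip. apply Permutation_sym; eauto.
  apply Permutation_middle. Qed.

Lemma bag_mid {A} (a x b c d : list (rv A)) : req_s (RBag a) (RBag x) ->
  req_s (RBag b) (RBag (c ++ d)) -> req_s (RBag (a ++ b)) (RBag (c ++ x ++ d)).
Proof. intros H1 H2. inversion H1; subst. inversion H2; subst.
  econstructor; [|apply Forall2_app; eauto].
  eapply perm_trans. apply Permutation_app_swap_app. apply Permutation_app; auto. Qed.

Lemma bag_app {A} (a x b y : list (rv A)) : req_s (RBag a) (RBag x) ->
  req_s (RBag b) (RBag y) -> req_s (RBag (a ++ b)) (RBag (x ++ y)).
Proof. intros. apply (bag_mid a x b [] y); auto. Qed.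

Lemma bag_nil {A} : req_s (RBag (@nil (rv A))) (RBag []).
Proof. econstructor; constructor. Qed.

Lemma bag_len {A} (l m : list (rv A)) : req_s (RBag l) (RBag m) -> length l = length m.
Proof. intros H; inversion H; subst. rewrite (Permutation_length H2). eapply Forall2_length; eauto. Qed.

Lemma bag_repeat {A} (a : rv A) n : req_v a a -> req_s (RBag (repeat a n)) (RBag (repeat a n)).
Proof. intros H. econstructor. apply Permutation_refl. induction n; simpl; constructor; auto. Qed.

Lemma goL_length l f : length (goL l f) = length l.
Proof. revert f; induction l; simpl; auto. Qed.

Lemma degL_app l m i : degL (l ++ m) i = degL l i + degL m i.
Proof. induction l; simpl; lia. Qed.

Lemma goL_app la lb f : goL (la ++ lb) f =
  goL la (fun i => firstn (degL la i) (f i)) ++ goL lb (fun i => skipn (degL la i) (f i)).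
Proof. revert f; induction la as [|v la IH]; intros f; simpl.
  - reflexivity.
  - rewrite IH. f_equal. f_equal. f_equal. apply functional_extensionality; intros i.
    rewrite firstn_firstn. f_equal. lia.
    f_equal. f_equal. apply functional_extensionality; intros i.
    rewrite skipn_firstn_comm. f_equal. lia.
    f_equal. apply functional_extensionality; intros i. rewrite skipn_skipn. f_equal. lia.
Qed.

Lemma app_len_inv {A} (m1 m2 a b : list A) : m1 ++ m2 = a ++ b -> length m1 = length a -> m1 = a /\ m2 = b.
Proof. revert a; induction m1 as [|z m1 IHm1]; intros [|x a'] H Hl; simpl in *; try discriminate; auto.
  inversion H; subst. destruct (IHm1 a') as [-> ->]; auto. Qed.

Lemma goL_split l f m1 b m2 : goL l f = m1 ++ b :: m2 ->
  exists la x lb, l = la ++ x :: lb /\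
    m1 = goL la (fun i => firstn (degL la i) (f i)) /\
    b = fill_v x (fun i => firstn (deg_v x i) (skipn (degL la i) (f i))) /\
    m2 = goL lb (fun i => skipn (deg_v x i) (skipn (degL la i) (f i))).
Proof. intros H.
  assert (Hn : length m1 < length l).
  { rewrite <- (goL_length l f), H, length_app; simpl; lia. }
  rewrite <- (firstn_skipn (length m1) l) in H |- *.
  rewrite goL_app in H. apply app_len_inv in H.
  2:{ rewrite goL_length, length_firstn. lia. }
  destruct H as [H1 H2].
  destruct (skipn (length m1) l) as [|x lb] eqn:E.
  - simpl in H2. discriminate.
  - simpl in H2. inversion H2; subst. do 3 eexists; split; [reflexivity|]. auto.
Qed.

Lemma always_first {A} a b (x : list A) :
  firstn a (firstn a x ++ skipn b (skipn a x)) = firstn a x /\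
  skipn a (firstn a x ++ skipn b (skipn a x)) = skipn b (skipn a x).
Proof. destruct (le_lt_dec a (length x)).
  - rewrite firstn_app, skipn_app, length_firstn.
    replace (a - Nat.min a (length x)) with 0 by lia. simpl.
    rewrite firstn_firstn, Nat.min_id, (skipn_all2 (firstn a x)) by (rewrite length_firstn; lia).
    rewrite ?app_nil_r. simpl. auto.
  - rewrite (skipn_all2 x) by lia. rewrite (firstn_all2 x) by lia. rewrite skipn_nil, app_nil_r.
    rewrite firstn_all2, skipn_all2 by lia. auto.
Qed.

Definition Pl (M0 : lterm) (l : list (rv nat)) :=
  forall a, In a l -> exists s, a = RLam s /\ inT M0 s.

Definition Core (k : nat) (M : lterm) := forall r1 r2 vs us, inT M r1 -> inT M r2 ->
  (forall i, i < k -> length (vs i) = deg_s r1 i) ->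
  (forall i, i < k -> length (us i) = deg_s r2 i) ->
  req_s (fill_s r1 vs) (fill_s r2 us) ->
  req_s r1 r2 /\ forall i, i < k -> req_s (RBag (vs i)) (RBag (us i)).

Lemma LL k M0 : Core k M0 -> forall l1 l2 vs us, Pl M0 l1 -> Pl M0 l2 ->
  (forall i, i < k -> length (vs i) = degL l1 i) ->
  (forall i, i < k -> length (us i) = degL l2 i) ->
  req_s (RBag (goL l1 vs)) (RBag (goL l2 us)) ->
  req_s (RBag l1) (RBag l2) /\ forall i, i < k -> req_s (RBag (vs i)) (RBag (us i)).
Proof.
  intros IH0 l1. induction l1 as [|v l1 IH]; intros l2 vs us P1 P2 L1 L2 H.
  - simpl in H. apply bag_len in H. rewrite goL_length in H.
    destruct l2; [|discriminate]. split. apply bag_nil.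
    intros i Hi. specialize (L1 i Hi); specialize (L2 i Hi); simpl in *.
    destruct (vs i), (us i); try discriminate; apply bag_nil.
  - destruct (P1 v (or_introl eq_refl)) as [s [-> Hs]].
    simpl in H. apply bag_cons_inv in H. destruct H as [m1 [b [m2 [E [Hb Hrest]]]]].
    apply goL_split in E. destruct E as [la [x [lb [-> [-> [-> ->]]]]]].
    assert (Hx : In x (la ++ x :: lb)) by (apply in_or_app; right; left; auto).
    destruct (P2 x Hx) as [t [-> Ht]]. simpl in Hb. inversion Hb; subst.
    set (us1 := fun i => firstn (degL la i) (us i) ++ skipn (deg_s t i) (skipn (degL la i) (us i))).
    assert (G : goL (la ++ lb) us1 = goL la (fun i => firstn (degL la i) (us i)) ++
        goL lb (fun i => skipn (deg_s t i) (skipn (degL la i) (us i)))).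
    { rewrite goL_app. f_equal; f_equal; apply functional_extensionality; intros i;
      unfold us1; apply always_first. }
    assert (E : (fun i => skipn (deg_v (RLam t) i) (skipn (degL la i) (us i))) =
                (fun i => skipn (deg_s t i) (skipn (degL la i) (us i)))) by reflexivity.
    rewrite E in Hrest. change (@app (rv Empty_set)) with (@app rterm_v) in Hrest. rewrite <- G in Hrest.
    assert (Lus : forall i, i < k -> length (us i) = degL la i + deg_s t i + degL lb i).
    { intros i Hi. rewrite L2 by auto. rewrite degL_app. simpl. lia. }
    destruct (IH0 s t (fun i => firstn (deg_s s i) (vs i))
                   (fun i => firstn (deg_s t i) (skipn (degL la i) (us i))) Hs Ht) as [Rst Rb1].
    + intros i Hi. rewrite length_firstn, L1 by auto. simpl. lia.
    + intros i Hi. rewrite length_firstn, length_skipn, Lus by auto. lia.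
    + auto.
    + destruct (IH (la ++ lb) (fun i => skipn (deg_s s i) (vs i)) us1) as [Rl Rb2].
      * intros a Ha. apply P1. right; auto.
      * intros a Ha. apply P2. apply in_app_or in Ha. apply in_or_app. simpl. tauto.
      * intros i Hi. rewrite length_skipn, L1 by auto. simpl. lia.
      * intros i Hi. unfold us1. rewrite length_app, length_firstn, !length_skipn, Lus by auto.
        rewrite degL_app. lia.
      * exact Hrest.
      * split.
        -- apply bag_cons; auto. constructor; auto.
        -- intros i Hi. specialize (Rb1 i Hi). specialize (Rb2 i Hi).
           rewrite <- (firstn_skipn (deg_s s i) (vs i)).
           rewrite <- (firstn_skipn (degL la i) (us i)).
           rewrite <- (firstn_skipn (deg_s t i) (skipn (degL la i) (us i))).
           apply bag_mid; auto.
Qed.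

Lemma goL_rvar x n f : goL (repeat (RVar x) n) f = repeat (RVar x) n.
Proof. revert f; induction n; intros f; simpl; auto. rewrite IHn; auto. Qed.

Lemma degL_rvar x n i : degL (repeat (RVar x) n) i = 0.
Proof. induction n; simpl; auto. Qed.

Lemma degL_rhole j n i : degL (repeat (RHole j) n) i = if Nat.eqb i j then n else 0.
Proof. induction n; simpl. destruct (Nat.eqb i j); auto. rewrite IHn. destruct (Nat.eqb i j); auto. Qed.

Lemma goL_rhole j n f : n <= length (f j) -> goL (repeat (RHole j) n) f = firstn n (f j).
Proof. revert f; induction n; intros f Hn; simpl; auto.
  rewrite Nat.eqb_refl. destruct (f j) as [|a t] eqn:E; simpl in Hn; [lia|]. simpl.
  rewrite IHn; simpl; rewrite Nat.eqb_refl, E; simpl; auto. lia. Qed.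

Lemma len0 {A} (l : list A) : length l = 0 -> l = [].
Proof. destruct l; simpl; auto; discriminate. Qed.

Lemma core_all k M : holes_below k M -> Core k M.
Proof.
  induction M; simpl; intros HB r1 r2 vs us H1 H2 L1 L2 H.
  - destruct H1 as [n ->]; destruct H2 as [m ->].
    rewrite !fill_bag, !goL_rvar in H. pose proof (bag_len _ _ H) as E.
    rewrite !repeat_length in E. subst m. split. apply bag_repeat; constructor.
    intros i Hi. specialize (L1 i Hi); specialize (L2 i Hi). rewrite deg_bag, degL_rvar in *.
    rewrite (len0 _ L1), (len0 _ L2). apply bag_nil.
  - destruct H1 as [n ->]; destruct H2 as [m ->].
    pose proof (L1 i HB) as Li. pose proof (L2 i HB) as Mi.
    rewrite deg_bag, degL_rhole, Nat.eqb_refl in Li, Mi.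
    rewrite !fill_bag, !goL_rhole in H by lia.
    rewrite !firstn_all2 in H by lia.
    pose proof (bag_len _ _ H) as E. split.
    + replace m with n by (rewrite <- Li, <- Mi; exact E). apply bag_repeat; constructor.
    + intros j Hj. destruct (Nat.eq_dec j i) as [->|ne]; auto.
      specialize (L1 j Hj); specialize (L2 j Hj). rewrite deg_bag, degL_rhole in *.
      apply Nat.eqb_neq in ne. rewrite ne in *.
      rewrite (len0 _ L1), (len0 _ L2). apply bag_nil.
  - destruct H1 as [l1 [-> P1]]; destruct H2 as [l2 [-> P2]].
    rewrite !fill_bag in H.
    apply (LL k M (IHM HB)); auto;
      try (intros i Hi; rewrite <- deg_bag; now auto);
      try (intros a Ha; apply in_map_iff in Ha; destruct Ha as [s [<- Hs]]; now eauto).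
  - destruct HB as [HB1 HB2].
    destruct H1 as [s1 [s2 [-> [A1 A2]]]]; destruct H2 as [t1 [t2 [-> [B1 B2]]]].
    simpl in H. inversion H; subst.
    destruct (IHM1 HB1 s1 t1 (fun i => firstn (deg_s s1 i) (vs i))
                (fun i => firstn (deg_s t1 i) (us i))) as [R1 Q1]; auto.
    { intros i Hi. rewrite length_firstn, L1 by auto. simpl. lia. }
    { intros i Hi. rewrite length_firstn, L2 by auto. simpl. lia. }
    destruct (IHM2 HB2 s2 t2 (fun i => skipn (deg_s s1 i) (vs i))
                (fun i => skipn (deg_s t1 i) (us i))) as [R2 Q2]; auto.
    { intros i Hi. rewrite length_skipn, L1 by auto. simpl. lia. }
    { intros i Hi. rewrite length_skipn, L2 by auto. simpl. lia. }
    split. constructor; auto.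
    intros i Hi. rewrite <- (firstn_skipn (deg_s s1 i) (vs i)), <- (firstn_skipn (deg_s t1 i) (us i)).
    apply bag_app; auto.
Qed.

Theorem mainTheorem1 (k : nat) (C : lterm) (c1 c2 rc1 rc2 : rs nat)
  (vs us : nat -> list rterm_v) :
  holes_below k C ->
  inT C c1 -> inT C c2 ->
  rigid_of rc1 c1 -> rigid_of rc2 c2 ->
  (forall i, i < k -> length (vs i) = deg_s c1 i) ->
  (forall i, i < k -> length (us i) = deg_s c2 i) ->
  req_s (fill_s rc1 vs) (fill_s rc2 us) ->
  req_s c1 c2 /\ (forall i, i < k -> req_s (RBag (vs i)) (RBag (us i))).
Proof.
  intros HB H1 H2 R1 R2 L1 L2 H. unfold rigid_of in *.
  assert (I1 : inT C rc1) by exact (inT_req C c1 rc1 H1 R1).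
  assert (I2 : inT C rc2) by exact (inT_req C c2 rc2 H2 R2).
  assert (M1 : forall i, i < k -> length (vs i) = deg_s rc1 i)
    by (intros i Hi; rewrite (rs_deg _ _ R1 i); auto).
  assert (M2 : forall i, i < k -> length (us i) = deg_s rc2 i)
    by (intros i Hi; rewrite (rs_deg _ _ R2 i); auto).
  destruct (core_all k C HB rc1 rc2 vs us I1 I2 M1 M2 H) as [R Q].
  split; auto. eapply rs_trans. apply rs_sym; eauto. eapply rs_trans; eauto.
Qed.
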